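(* Let $\Delta\in\mathfrak{t}_{\mathrm{loc}}$ and $A\in\mathbb{C}^{2^n\times 2^n}$ satisfy $[\Delta,A]=i\varphi A$ for some $\varphi\in\mathbb{Q}$. Then there exists a rational $\Delta'\in\mathfrak{t}_{\mathrm{loc}}$, i.e. $\Delta'=i\cdot\mathrm{diag}(\mu_1,\dots,\mu_{2^n})$ with all $\mu_k\in\mathbb{Q}$, such that $[\Delta',A]=i\varphi A$.
   Context: $\mathfrak{t}_{\mathrm{loc}}$ is the set of diagonal matrices in the Lie algebra of $SU(2)\otimes\cdots\otimes SU(2)$ ($n$ factors), i.e. all matrices $\sum_{j=1}^n I_2\otimes\cdots\otimes I_2\otimes\mathrm{diag}(i\lambda_j,-i\lambda_j)\otimes I_2\otimes\cdots\otimes I_2$ (the diagonal factor in the $j$-th position) with $\lambda_j\in\mathbb{R}$. $[X,Y]=XY-YX$. *)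

(* Defs.v *)
From HB Require Import structures.
From mathcomp Require Import all_boot all_order all_algebra.
From mathcomp Require Import reals.
From mathcomp Require Import complex.
Set Implicit Arguments. Unset Strict Implicit. Unset Printing Implicit Defensive.
Import Order.TTheory GRing.Theory Num.Theory ComplexField.
Local Open Scope ring_scope.
Local Open Scope complex_scope.

(* Bit j (counting from the LEFT, i.e. tensor position j, 0-based) of the
   basis index k of (C^2)^{\otimes n}: the j-th tensor factor is the
   (n-1-j)-th binary digit of k (first factor = most significant bit). *)
Definition tbit (n : nat) (j : 'I_n) (k : nat) : bool :=
  odd (k %/ 2 ^ (n.-1 - j)).

(* Diagonal coefficient mu_k (real) of the element of t_loc with
   parameters lam : sum_j I (x) .. (x) diag(i lam_j, -i lam_j) (x) .. (x) I
   equals  i * mu_k  at position k. *)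
Definition tloc_coef (R : rcfType) (n : nat) (lam : 'I_n -> R) (k : 'I_(2 ^ n)) : R :=
  \sum_(j < n) (if tbit j k then - lam j else lam j).

Definition tloc (R : rcfType) (n : nat) (lam : 'I_n -> R) : 'M[complex R]_(2 ^ n) :=
  \matrix_(k, l) (if k == l then 'i * (tloc_coef lam k)%:C else 0).

Definition commutator (C : pzRingType) (m : nat) (X Y : 'M[C]_m) : 'M[C]_m :=
  X *m Y - Y *m X.

(* Main.v *)
Require Import Defs.
From HB Require Import structures.
From mathcomp Require Import all_boot all_order all_algebra.
From mathcomp Require Import reals.
From mathcomp Require Import complex.
Import Order.TTheory GRing.Theory Num.Theory ComplexField.
Local Open Scope ring_scope.
Local Open Scope complex_scope.

Lemma tlocE (R : rcfType) n (lam : 'I_n -> R) :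
  tloc lam = diag_mx (\row_k ('i * (tloc_coef lam k)%:C)).
Proof. by apply/matrixP=> k l; rewrite !mxE eq_sym; case: eqP => _; rewrite ?mulr1n ?mulr0n. Qed.

Lemma comm_entry (R : rcfType) n (lam : 'I_n -> R) (A : 'M[complex R]_(2 ^ n)) k l :
  commutator (tloc lam) A k l =
  'i * ((tloc_coef lam k)%:C - (tloc_coef lam l)%:C) * A k l.
Proof.
rewrite /commutator tlocE mul_diag_mx mul_mx_diag !mxE.
by rewrite mulrBr mulrBl [A k l * _]mulrC.
Qed.

Lemma key (R : rcfType) n (lam : 'I_n -> R) (A : 'M[complex R]_(2 ^ n)) (phi : rat) :
  commutator (tloc lam) A = ('i * ratr phi) *: A <->
  (forall k l, A k l != 0 -> tloc_coef lam k - tloc_coef lam l = ratr phi).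
Proof.
have i0 : ('i : complex R) != 0 by apply/eqP => /(congr1 (@complex.Im R)) /= /eqP; rewrite oner_eq0.
split.
- move=> /matrixP H k l Akl; have := H k l; rewrite comm_entry mxE.
  move/(mulIf Akl)/(mulfI i0)/eqP.
  rewrite -(fmorph_rat (real_complex R)) -rmorphB /=.
  by move/eqP/(fmorph_inj (real_complex R)).
- move=> H; apply/matrixP => k l; rewrite comm_entry mxE.
  have [->|Akl] := eqVneq (A k l) 0; first by rewrite !mulr0.
  by rewrite -rmorphB /= (H _ _ Akl) -(fmorph_rat (real_complex R)).
Qed.
Theorem lemma3p6 (R : realType) (n : nat) (lam : 'I_n -> R)
    (A : 'M[complex R]_(2 ^ n)) (phi : rat) :
  commutator (tloc lam) A = ('i * ratr phi) *: A ->
  exists lam' : 'I_n -> R,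
    (forall k : 'I_(2 ^ n), exists q : rat, tloc_coef lam' k = ratr q) /\
    commutator (tloc lam') A = ('i * ratr phi) *: A.
Proof.
move=> /key K.
pose coef (j : 'I_n) (k : 'I_(2 ^ n)) : rat := if tbit j k then -1 else 1.
have coefE : forall (lam0 : 'I_n -> R) k,
    tloc_coef lam0 k = \sum_j ratr (coef j k) * lam0 j.
  move=> lam0 k; apply: eq_bigr => j _; rewrite /coef.
  by case: tbit; rewrite ?rmorphN ?rmorph1 ?mulN1r ?mul1r.
pose T := ('I_(2 ^ n) * 'I_(2 ^ n))%type.
pose M : 'M[rat]_(n, #|{: T}|) := \matrix_(j, c)
  (if A (enum_val c).1 (enum_val c).2 != 0
   then coef j (enum_val c).1 - coef j (enum_val c).2 else 0).
pose b : 'rV[rat]_(#|{: T}|) := \row_c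
  (if A (enum_val c).1 (enum_val c).2 != 0 then phi else 0).
have : (b <= M)%MS.
  rewrite -(map_submx (@ratr R)); apply/submxP; exists (\row_j lam j).
  apply/matrixP => i c; rewrite !mxE.
  under eq_bigr do rewrite !mxE.
  case: ifP => Akl.
  - apply: etrans; first exact/esym/(K _ _ Akl).
    rewrite !coefE -sumrB; apply: eq_bigr => j _.
    by rewrite rmorphB /= mulrBr ?mulrBl ![lam j * _]mulrC.
  - rewrite rmorph0 big1 // => j _; by rewrite ?rmorph0 mulr0.
move/submxP => [D hD].
exists (fun j => ratr (D 0 j)); split.
  move=> k; exists (\sum_j coef j k * D 0 j).
  by rewrite coefE rmorph_sum; apply: eq_bigr => j _; rewrite rmorphM.
apply/key => k l Akl.
have := congr1 (fun m : 'rV[rat]_(#|{: T}|) => m 0 (enum_rank ((k, l) : T))) hD.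
rewrite !mxE enum_rankK /= Akl => ->.
rewrite rmorph_sum !coefE -sumrB; apply: eq_bigr => j _.
by rewrite !mxE enum_rankK /= Akl rmorphM rmorphB /= mulrBr ?mulrBl ![ratr (D 0 j) * _]mulrC.
Qed.
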